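(* Let $k\ge 0$ and $n\ge 2k+2$ be integers and let $t_1<t_2<\dots<t_{n+1}$ be real numbers. Then there is $\lambda_0\in\mathbb R$ such that for every $\lambda\ge\lambda_0$ the polytope \[ P:=\mathrm{conv}\Big(\{(t_i,t_i^2,\dots,t_i^{2k+2})^T : i\in[n+1]\}\ \cup\ \{(t_i,t_i^2,\dots,t_i^{2k+1},\lambda-t_i^{2k+2})^T : i\in[n+1]\}\Big)\subset\mathbb R^{2k+2} \] is a $(k,(1,n))$-PSN polytope of dimension $2k+2$, i.e. its $k$-skeleton is combinatorially equivalent to that of $\Delta_1\times\Delta_n$.
   Context: $\Delta_m$ denotes the $m$-dimensional simplex. For $\mathbf n=(n_1,\dots,n_r)$ with $r\ge1$ and all $n_i\ge1$, $\Delta_{\mathbf n}:=\Delta_{n_1}\times\dots\times\Delta_{n_r}$. The $k$-skeleton of a polytope is the poset of its faces of dimension at most $k$; two $k$-skeleta are combinatorially equivalent if these posets are isomorphic. For $k\ge0$, a convex polytope is $(k,\mathbf n)$-PSN if its $k$-skeleton is combinatorially equivalent to that of $\Delta_{\mathbf n}$. *)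

(* Defs.v *)
From HB Require Import structures.
From mathcomp Require Import all_boot all_order all_algebra.
Set Implicit Arguments. Unset Strict Implicit. Unset Printing Implicit Defensive.
Import Order.TTheory GRing.Theory Num.Theory.
Local Open Scope ring_scope.

Section Polytopes.
Variable R : realFieldType.

Definition pset (d : nat) := 'rV[R]_d -> Prop.

Definition dotv (d : nat) (c x : 'rV[R]_d) : R := \sum_(i < d) c 0 i * x 0 i.

Definition conv (d : nat) (I : finType) (p : I -> 'rV[R]_d) : pset d :=
  fun x => exists w : I -> R,
    [/\ forall i, 0 <= w i, \sum_i w i = 1 & x = \sum_i w i *: p i].

(* F is a face of X: F = X ∩ {c.x = b} for a valid inequality c.x <= b of X
   (c = 0 allowed, giving X itself and the empty face). *)
Definition is_face (d : nat) (X F : pset d) : Prop :=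
  exists (c : 'rV[R]_d) (b : R),
    (forall x, X x -> dotv c x <= b) /\
    (forall x, F x <-> (X x /\ dotv c x = b)).

Definition aff_indep (d m : nat) (p : 'I_m.+1 -> 'rV[R]_d) : Prop :=
  \rank (\matrix_(i < m) (p (lift ord0 i) - p ord0)) = m.

Definition dim_le (d : nat) (X : pset d) (m : nat) : Prop :=
  ~ exists p : 'I_m.+2 -> 'rV[R]_d, (forall i, X (p i)) /\ aff_indep p.

Definition has_dim (d : nat) (X : pset d) (m : nat) : Prop :=
  (exists p : 'I_m.+1 -> 'rV[R]_d, (forall i, X (p i)) /\ aff_indep p)
  /\ dim_le X m.

(* F belongs to the k-skeleton of X: a face of X of dimension at most k
   (the empty face, of dimension -1, included) *)
Definition in_skel (d : nat) (k : nat) (X F : pset d) : Prop :=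
  is_face X F /\ dim_le F k.

Definition subset_p (d : nat) (F G : pset d) : Prop := forall x, F x -> G x.
Definition eq_p (d : nat) (F G : pset d) : Prop := forall x, F x <-> G x.

(* the k-skeleta of X and Y are combinatorially equivalent: there is a map
   between their faces of dimension <= k which is an order isomorphism of the
   face posets (ordered by inclusion), faces being sets up to extensional
   equality. *)
Definition skel_equiv (d e : nat) (k : nat) (X : pset d) (Y : pset e) : Prop :=
  exists f : pset d -> pset e,
    [/\ forall F, in_skel k X F -> in_skel k Y (f F),
        forall G, in_skel k Y G -> exists2 F, in_skel k X F & eq_p (f F) G
      & forall F1 F2, in_skel k X F1 -> in_skel k X F2 ->
          (subset_p F1 F2 <-> subset_p (f F1) (f F2))].

Definition simplex (m : nat) : pset m :=
  fun y => (forall i, 0 <= y 0 i) /\ \sum_(i < m) y 0 i <= 1.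

Definition prod_simplex (a b : nat) : pset (a + b) :=
  fun x => simplex (lsubmx x) /\ simplex (rsubmx x).

(* the 2(n+1) points of the proposition, indexed by bool * 'I_(n+1):
   (false,i) |-> (t_i, t_i^2, ..., t_i^(2k+2)),
   (true, i) |-> (t_i, ..., t_i^(2k+1), lam - t_i^(2k+2)). *)
Definition psn_points (k n : nat) (t : 'I_n.+1 -> R) (lam : R)
    (q : bool * 'I_n.+1) : 'rV[R]_(2 * k + 2) :=
  \row_(j < 2 * k + 2)
    (if q.1 && (j == (2 * k + 1)%N :> nat)
     then lam - t q.2 ^+ (2 * k + 2)
     else t q.2 ^+ j.+1).

End Polytopes.

(* Main.v *)
Require Import Defs.
From HB Require Import structures.
From mathcomp Require Import all_boot all_order all_algebra.
Import Order.TTheory GRing.Theory Num.Theory.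
Local Open Scope ring_scope.
Set Implicit Arguments. Unset Strict Implicit. Unset Printing Implicit Defensive.
From Stdlib Require Import Classical Lia.

Section Gen.
Variable R : realFieldType.

Lemma dotvD d (c x y : 'rV[R]_d) : dotv c (x + y) = dotv c x + dotv c y.
Proof. rewrite /dotv -big_split /=; by apply: eq_bigr => i _; rewrite mxE mulrDr. Qed.
Lemma dotvZ d (c x : 'rV[R]_d) a : dotv c (a *: x) = a * dotv c x.
Proof. rewrite /dotv mulr_sumr; by apply: eq_bigr => i _; rewrite mxE mulrCA. Qed.
Lemma dotvN d (c x : 'rV[R]_d) : dotv c (- x) = - dotv c x.
Proof. by rewrite -scaleN1r dotvZ mulN1r. Qed.
Lemma dotvB d (c x y : 'rV[R]_d) : dotv c (x - y) = dotv c x - dotv c y.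
Proof. by rewrite dotvD dotvN. Qed.
Lemma dotv0 d (c : 'rV[R]_d) : dotv c 0 = 0.
Proof. by rewrite /dotv big1 // => i _; rewrite mxE mulr0. Qed.
Lemma dotv0l d (x : 'rV[R]_d) : dotv 0 x = 0.
Proof. by rewrite /dotv big1 // => i _; rewrite mxE mul0r. Qed.
Lemma dotv_sum d (I : finType) (c : 'rV[R]_d) (F : I -> 'rV[R]_d) :
  dotv c (\sum_i F i) = \sum_i dotv c (F i).
Proof.
rewrite /dotv; under eq_bigr do rewrite summxE mulr_sumr.
exact: exchange_big.
Qed.

Lemma aff_indep_tri d m (x : 'I_m.+1 -> 'rV[R]_d) (phi : 'I_m -> 'rV[R]_d) :
  (forall l l' : 'I_m, (l < l')%N -> dotv (phi l) (x (lift ord0 l') - x ord0) = 0) ->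
  (forall l, dotv (phi l) (x (lift ord0 l) - x ord0) != 0) -> aff_indep x.
Proof.
move=> Hz Hnz; rewrite /aff_indep.
set M := \matrix_(i < m) _.
apply/eqP; change (row_free M); apply: inj_row_free => v vM0.
have key l : \sum_(l' < m) v 0 l' * dotv (phi l) (x (lift ord0 l') - x ord0) = 0.
  transitivity (dotv (phi l) (v *m M)); last by rewrite vM0 dotv0.
  rewrite mulmx_sum_row dotv_sum.
  by apply: eq_bigr => i _; rewrite dotvZ rowK.
suff H : forall N (l : 'I_m), (l < N)%N -> v 0 l = 0.
  by apply/rowP => l; rewrite mxE (H l.+1).
elim=> [//|N IH] l; rewrite ltnS leq_eqVlt => /orP [/eqP lN|]; last exact: IH.
have := key l; rewrite (bigD1 l) //= big1 ?addr0.
  by move/eqP; rewrite mulf_eq0 (negbTE (Hnz l)) orbF => /eqP.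
move=> l' ne; case: (ltngtP l' l) => [lt|gt|eq].
- by rewrite IH ?mul0r // -lN.
- by rewrite Hz ?mulr0.
- by move: ne; rewrite (val_inj eq) eqxx.
Qed.

Definition convS d (I : finType) (p : I -> 'rV[R]_d) (S : I -> Prop) : pset R d :=
  fun x => exists w : I -> R, [/\ forall i, 0 <= w i, forall i, ~ S i -> w i = 0,
     \sum_i w i = 1 & x = \sum_i w i *: p i].

Section Conv.
Variables (d : nat) (I : finType) (p : I -> 'rV[R]_d).

Lemma convS_ext (S1 S2 : I -> Prop) : (forall i, S1 i <-> S2 i) ->
  eq_p (convS p S1) (convS p S2).
Proof.
move=> H x; split; case=> w [w0 wS w1 ->]; exists w; split=> // i Si;
  apply: wS => Si'; apply: Si; apply/(H i) => //.
Qed.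

Lemma convS_mono (S1 S2 : I -> Prop) : (forall i, S1 i -> S2 i) ->
  subset_p (convS p S1) (convS p S2).
Proof.
move=> H x; case=> w [w0 wS w1 ->]; exists w; split=> // i Si;
  apply: wS => Si'; apply: Si; exact: H.
Qed.

Lemma sum_delta_pt (i : I) : \sum_j (j == i)%:R *: p j = p i.
Proof.
rewrite (bigD1 i) //= eqxx scale1r big1 ?addr0 // => j /negbTE ->.
by rewrite scale0r.
Qed.

Lemma sum_delta (i : I) : \sum_j ((j == i)%:R : R) = 1.
Proof. by rewrite (bigD1 i) //= eqxx big1 ?addr0 // => j /negbTE ->. Qed.

Lemma convS_pt (S : I -> Prop) i : S i -> convS p S (p i).
Proof.
move=> Si; exists (fun j => (j == i)%:R); split.
- by move=> j; rewrite ler0n.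
- by move=> j nS; case: eqP => // E; case: nS; rewrite E.
- exact: sum_delta.
- by rewrite sum_delta_pt.
Qed.

Lemma conv_pt i : conv p (p i).
Proof.
exists (fun j => (j == i)%:R); split.
- by move=> j; rewrite ler0n.
- exact: sum_delta.
- by rewrite sum_delta_pt.
Qed.

Lemma dotv_comb c (w : I -> R) :
  dotv c (\sum_i w i *: p i) = \sum_i w i * dotv c (p i).
Proof. by rewrite dotv_sum; apply: eq_bigr => i _; rewrite dotvZ. Qed.

Lemma valid_conv c b : (forall i, dotv c (p i) <= b) ->
  forall x, conv p x -> dotv c x <= b.
Proof.
move=> H x [w [w0 w1 ->]]; rewrite dotv_comb.
apply: (@le_trans _ _ (\sum_i w i * b)).
  by apply: ler_sum => i _; apply: ler_wpM2l.
by rewrite -mulr_suml w1 mul1r.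
Qed.

Lemma face_convS c b : (forall i, dotv c (p i) <= b) ->
  forall x, (conv p x /\ dotv c x = b) <-> convS p (fun i => dotv c (p i) = b) x.
Proof.
move=> H x; split.
- case=> [[w [w0 w1 ->]]]; rewrite dotv_comb => E.
  exists w; split=> // i nS.
  have Z : \sum_i w i * (b - dotv c (p i)) = 0.
    under eq_bigr do rewrite mulrBr.
    by rewrite sumrB -mulr_suml w1 mul1r E subrr.
  have Hi : w i * (b - dotv c (p i)) = 0.
    by apply: (psumr_eq0P _ Z) => // j _; rewrite mulr_ge0 ?subr_ge0.
  move/eqP: Hi; rewrite mulf_eq0 subr_eq0 => /orP[/eqP//|/eqP E'].
  by case: nS.
- case=> w [w0 wS w1 ->]; split; first by exists w.
  rewrite dotv_comb (eq_bigr (fun i => w i * b)) ?(big_morph _ _ _) //.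
    by rewrite -mulr_suml w1 mul1r.
  move=> i _; case: (dotv c (p i) =P b) => [->//|nS].
  by rewrite wS // !mul0r.
Qed.

Lemma dim_le_sub (S : I -> Prop) k (x0 : 'rV[R]_d) r (V : 'M[R]_(r, d)) :
  (forall i, S i -> (p i - x0 <= V)%MS) -> (\rank V <= k)%N ->
  dim_le (convS p S) k.
Proof.
move=> HS Hr [q [Hq Hind]].
have Hsub y : convS p S y -> (y - x0 <= V)%MS.
  case=> w [w0 wS w1 ->].
  have -> : \sum_i w i *: p i - x0 = \sum_i w i *: (p i - x0).
    rewrite [RHS](eq_bigr (fun i => w i *: p i - w i *: x0)); last first.
      by move=> i _; rewrite scalerBr.
    by rewrite sumrB -scaler_suml w1 scale1r.
  apply: summx_sub => i _; case: (classic (S i)) => Si.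
    exact: scalemx_sub (HS i Si).
  by rewrite wS // scale0r sub0mx.
move: Hind; rewrite /aff_indep => Hind.
set M := \matrix_(i < k.+1) _ in Hind.
have MV : (M <= V)%MS.
  apply/row_subP => i; rewrite rowK.
  have -> : q (lift ord0 i) - q ord0 = (q (lift ord0 i) - x0) + (-1) *: (q ord0 - x0).
    by rewrite scaleN1r opprB addrA subrK.
  by apply: addmx_sub; [|apply: scalemx_sub]; apply: Hsub.
have := mxrankS MV; rewrite Hind => H.
by move: (leq_trans H Hr); rewrite ltnn.
Qed.

End Conv.
Arguments convS_ext {d I p S1 S2}.

Lemma dim_le_ext d (X Y : pset R d) k : eq_p X Y -> dim_le X k -> dim_le Y k.
Proof. by move=> E H [q [Hq Hi]]; apply: H; exists q; split=> // i; apply/E. Qed.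

Lemma in_skel_ext d k (X X' F F' : pset R d) : eq_p X X' -> eq_p F F' ->
  in_skel k X F -> in_skel k X' F'.
Proof.
move=> EX EF [[c [b [Hv HF]]] Hd]; split.
- exists c, b; split=> [x /EX|x]; first exact: Hv.
  by rewrite -EF HF EX.
- exact: dim_le_ext Hd.
Qed.

Section Skel.
Variables (I : finType) (k : nat) (good : (I -> Prop) -> Prop).

Definition goodA d (p : I -> 'rV[R]_d) := forall c b, (forall i, dotv c (p i) <= b) ->
  dim_le (convS p (fun i => dotv c (p i) = b)) k -> good (fun i => dotv c (p i) = b).
Definition goodB d (p : I -> 'rV[R]_d) := forall S, good S ->
  (exists c b, (forall i, dotv c (p i) <= b) /\ (forall i, dotv c (p i) = b <-> S i))
  /\ dim_le (convS p S) k.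

Lemma in_skel_good d (p : I -> 'rV[R]_d) S : goodB p -> good S ->
  in_skel k (conv p) (convS p S).
Proof.
move=> gB gS; have [[c [b [Hv HS]]] Hd] := gB S gS; split=> //.
exists c, b; split; first exact: valid_conv.
move=> x; split=> Hx.
- apply/(face_convS Hv); apply: (proj1 (convS_ext _ x) Hx) => i; exact: iff_sym (HS i).
- have := proj1 (face_convS Hv x) Hx; apply: (proj1 (convS_ext _ x)) => i; exact: HS.
Qed.

Lemma pt_convS_good d (p : I -> 'rV[R]_d) S : goodB p -> good S ->
  forall i, convS p S (p i) <-> S i.
Proof.
move=> gB gS i; split; last exact: convS_pt.
have [[c [b [Hv HS]]] _] := gB S gS.
move=> Hx.
have := proj1 (convS_ext (fun j => iff_sym (HS j)) (p i)) Hx.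
by move/(face_convS Hv) => [_ E]; apply/HS.
Qed.

Lemma skel_repr d (p : I -> 'rV[R]_d) F : goodA p -> in_skel k (conv p) F ->
  exists S, [/\ good S, eq_p F (convS p S) & forall i, F (p i) <-> S i].
Proof.
move=> gA [[c [b [Hv HF]]] Hd].
have Hp i : dotv c (p i) <= b by apply: Hv; apply: conv_pt.
have E : eq_p F (convS p (fun i => dotv c (p i) = b)).
  move=> x; split=> Hx.
  - by apply/(face_convS Hp); apply/HF.
  - by apply/HF; apply/(face_convS Hp).
exists (fun i => dotv c (p i) = b); split.
- by apply: gA => //; exact: dim_le_ext Hd.
- exact: E.
- move=> i; split=> [/HF []//|Hi]; apply/HF; split=> //; exact: conv_pt.
Qed.

Lemma skel_from d e (p : I -> 'rV[R]_d) (q : I -> 'rV[R]_e) (Y : pset R e) :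
  goodA p -> goodB p -> goodA q -> goodB q -> eq_p (conv q) Y ->
  skel_equiv k (conv p) Y.
Proof.
move=> gAp gBp gAq gBq EY.
exists (fun F => convS q (fun i => F (p i))); split.
- move=> F /(skel_repr gAp) [S [gS EF HS]].
  apply: (in_skel_ext EY (convS_ext (fun i => iff_sym (HS i)))).
  exact: in_skel_good.
- move=> G HG.
  have HG' : in_skel k (conv q) G.
    by apply: (in_skel_ext _ _ HG) => x; split=> Hx //; apply/(EY x).
  have [S [gS EG _]] := skel_repr gAq HG'.
  exists (convS p S); first exact: in_skel_good.
  move=> x; split=> Hx.
  + apply/EG; apply: (proj1 (convS_ext _ x) Hx) => i; exact: pt_convS_good.
  + have := proj1 (EG x) Hx; apply: (proj2 (convS_ext _ x)) => i; exact: pt_convS_good.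
- move=> F1 F2 H1 H2.
  have [S1 [gS1 E1 HS1]] := skel_repr gAp H1.
  have [S2 [gS2 E2 HS2]] := skel_repr gAp H2.
  split=> H.
  + by apply: convS_mono => i; exact: H.
  + move=> x /E1 Hx; apply/E2.
    apply: (convS_mono _ Hx) => i S1i.
    have : convS q (fun j => F2 (p j)) (q i).
      by apply: H; apply: convS_pt; exact/HS1.
    by move/(convS_ext HS2) /(pt_convS_good gBq gS2).
Qed.
End Skel.

Ltac nlia :=
  repeat match goal with H : is_true (leq _ _) |- _ => revert H end;
  rewrite -?plusE -?multE -?minusE;
  repeat (let H := fresh "H" in move=> /ssrnat.leP H);
  apply/ssrnat.leP; lia.

Definition goodR (k n : nat) (S : bool * 'I_n.+1 -> Prop) : Prop :=
  exists (E : {set bool}) (J : {set 'I_n.+1}),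
    (#|E| + #|J| <= k.+2)%N /\ forall e j, S (e, j) <-> (e \in E /\ j \in J).

Definition inj_upto (n : nat) (s : nat -> 'I_n.+1) (N : nat) :=
  forall l l', (l < N)%N -> (l' < N)%N -> s l = s l' -> l = l'.

Definition pat1 d k n (pt : bool * 'I_n.+1 -> 'rV[R]_d) :=
  forall e s, inj_upto s k.+2 -> aff_indep (fun l : 'I_k.+2 => pt (e, s l)).
Definition pat2 d k n (pt : bool * 'I_n.+1 -> 'rV[R]_d) :=
  forall s, inj_upto s k.+1 -> aff_indep (fun l : 'I_k.+2 =>
    if (l == k.+1 :> nat) then pt (true, s 0%N) else pt (false, s l)).

Lemma good_of_rect d k n (pt : bool * 'I_n.+1 -> 'rV[R]_d) S
  (E : {set bool}) (J : {set 'I_n.+1}) :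
  pat1 k pt -> pat2 k pt -> (forall e j, S (e, j) <-> (e \in E /\ j \in J)) ->
  dim_le (convS pt S) k -> goodR k S.
Proof.
move=> P1 P2 HS Hd.
case: (leqP (#|E| + #|J|) k.+2) => Hc; first by exists E, J.
case: (posnP #|E|) => [E0|Ep].
  exists set0, set0; rewrite !cards0; split=> // e j; rewrite HS !inE.
  by split=> [[eE _]|[]//]; move: (card0_eq E0 e); rewrite eE.
case: (posnP #|J|) => [J0|Jp].
  exists set0, set0; rewrite !cards0; split=> // e j; rewrite HS !inE.
  by split=> [[_ jJ]|[]//]; move: (card0_eq J0 j); rewrite jJ.
set s := fun l => nth ord0 (enum J) l.
have sJ l : (l < #|J|)%N -> s l \in J.
  by move=> Hl; rewrite -mem_enum mem_nth // -cardE.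
have sinj : inj_upto s #|J|.
  move=> l l' Hl Hl' /eqP; rewrite /s nth_uniq ?enum_uniq -?cardE //.
  by move/eqP.
have [e0 e0E] : exists e0, e0 \in E by apply/card_gt0P.
case: (leqP #|E| 1) => E1.
- have HJ : (k.+2 <= #|J|)%N by nlia.
  case: Hd; exists (fun l : 'I_k.+2 => pt (e0, s l)); split.
    move=> l; apply: convS_pt; apply/HS; split=> //; apply: sJ.
    exact: leq_trans (ltn_ord l) HJ.
  apply: P1 => l l' Hl Hl'; apply: sinj; exact: leq_trans HJ.
- have allE b : b \in E.
    apply/negPn/negP => bE.
    have : E \subset [set ~~ b].
      by apply/subsetP => x xE; rewrite inE; case: x b xE bE {E1} => [] [] // ->.
    by move/subset_leq_card; rewrite cards1 => H; move: (leq_trans E1 H).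
  have E2 : (#|E| <= 2)%N by rewrite -card_bool max_card.
  have HJ : (k.+1 <= #|J|)%N by nlia.
  case: Hd; exists (fun l : 'I_k.+2 =>
    if (l == k.+1 :> nat) then pt (true, s 0%N) else pt (false, s l)); split.
    move=> l; case: ifP => Hl; apply: convS_pt; apply/HS; split=> //; apply: sJ => //.
    have := ltn_ord l; rewrite ltnS leq_eqVlt Hl /= => H.
    exact: leq_trans H HJ.
  apply: P2 => l l' Hl Hl'; apply: sinj; exact: leq_trans HJ.
Qed.


Lemma convS_empty_dim d (I : finType) (p : I -> 'rV[R]_d) (S : I -> Prop) k :
  (forall i, ~ S i) -> dim_le (convS p S) k.
Proof.
move=> HS [q [Hq _]]; case: (Hq ord0) => w [_ wS w1 _].
have : \sum_i w i = 0 by apply: big1 => i _; apply: wS.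
by rewrite w1 => /eqP; rewrite oner_eq0.
Qed.

Lemma VJ_sub d n (f : 'I_n.+1 -> 'rV[R]_d) (J : {set 'I_n.+1}) j : j \in J ->
  (f j - f (nth ord0 (enum J) 0) <=
   \matrix_(l < #|J|.-1) (f (nth ord0 (enum J) l.+1) - f (nth ord0 (enum J) 0)))%MS.
Proof.
rewrite -mem_enum => jJ.
have Hi : (index j (enum J) < #|J|)%N by rewrite cardE index_mem.
rewrite -{1}(nth_index ord0 jJ).
case E: (index j (enum J)) Hi => [|l] Hi.
  by rewrite subrr sub0mx.
have Hl : (l < #|J|.-1)%N by rewrite -ltnS prednK // (leq_ltn_trans _ Hi).
by apply: (eq_row_sub (Ordinal Hl)); rewrite rowK.
Qed.

Lemma dimB d k n (pt : bool * 'I_n.+1 -> 'rV[R]_d) (w : 'rV[R]_d) S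
  (E : {set bool}) (J : {set 'I_n.+1}) :
  (forall j, (pt (true, j) - pt (false, j) <= w)%MS) ->
  (#|E| + #|J| <= k.+2)%N -> (forall e j, S (e, j) <-> (e \in E /\ j \in J)) ->
  dim_le (convS pt S) k.
Proof.
move=> Hw Hc HS.
case: (posnP #|E|) => [E0|Ep].
  apply: convS_empty_dim => -[e j] /HS [eE _].
  by move: (card0_eq E0 e); rewrite eE.
case: (posnP #|J|) => [J0|Jp].
  apply: convS_empty_dim => -[e j] /HS [_ jJ].
  by move: (card0_eq J0 j); rewrite jJ.
set s0 := nth ord0 (enum J) 0.
have [e0 e0E] : exists e0, e0 \in E by apply/card_gt0P.
case: (leqP #|E| 1) => E1.
- have Ee : forall e, e \in E -> e = e0.
    move=> e eE; apply/eqP; apply/negPn/negP => ne.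
    have : [set e; e0] \subset E by apply/subsetP => x; rewrite !inE => /orP[] /eqP ->.
    move/subset_leq_card; rewrite cards2 ne => H.
    by move: (leq_trans H E1).
  apply: (@dim_le_sub _ _ _ _ _ (pt (e0, s0)) _
    (\matrix_(l < #|J|.-1) (pt (e0, nth ord0 (enum J) l.+1) - pt (e0, s0)))).
  + move=> [e j] /HS [/Ee -> jJ].
    exact: (VJ_sub (fun j => pt (e0, j)) jJ).
  + apply: leq_trans (rank_leq_row _) _; nlia.
- have E2 : (#|E| <= 2)%N by rewrite -card_bool max_card.
  set V := \matrix_(l < #|J|.-1) (pt (false, nth ord0 (enum J) l.+1) - pt (false, s0)).
  apply: (@dim_le_sub _ _ _ _ _ (pt (false, s0)) _ (V + w)%MS).
  + move=> [[] j] /HS [_ jJ].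
    * have -> : pt (true, j) - pt (false, s0) =
               (pt (true, j) - pt (false, j)) + (pt (false, j) - pt (false, s0)).
        by rewrite addrA subrK.
      apply: addmx_sub.
        exact: submx_trans (Hw j) (addsmxSr _ _).
      exact: submx_trans (VJ_sub (fun j => pt (false, j)) jJ) (addsmxSl _ _).
    * exact: submx_trans (VJ_sub (fun j => pt (false, j)) jJ) (addsmxSl _ _).
  + apply: leq_trans (leq_of_leqif (mxrank_adds_leqif _ _)) _.
    have := rank_leq_row V; have := rank_leq_row w; nlia.
Qed.

Lemma id1 (G a T Y : R) : -G - -a - (-1)*T + (-1)*Y = a - G - (Y - T).
Proof. by rewrite !mulN1r !opprK opprB addrA (addrC (-G)). Qed.
Lemma id2 (G a T Y lam : R) : -G - -a - (-1)*T + 1*Y = (a + lam) - G - (lam - T - Y).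
Proof.
rewrite mulN1r !opprK mul1r !opprB (addrC (-G)) (addrAC a lam) -(addrA (a - G) lam) (addrCA lam) (addrCA lam T) subrr addr0.
by rewrite -addrA (addrC Y).
Qed.
Lemma id3 (G a T Y : R) : -G - -a - (-0)*T + 0*Y = a - G - 0.
Proof. rewrite oppr0 !mul0r !subr0 !addr0 opprK; exact: addrC. Qed.

Lemma expose_gen d n (pt : bool * 'I_n.+1 -> 'rV[R]_d) (c : 'rV[R]_d) b
  (gv : 'I_n.+1 -> R) (dl : bool -> 'I_n.+1 -> R) (E : {set bool}) (J : {set 'I_n.+1})
  (S : bool * 'I_n.+1 -> Prop) :
  (forall j, 0 <= gv j) -> (forall j, gv j = 0 <-> j \in J) ->
  (forall e j, 0 <= dl e j) -> (forall e j, dl e j = 0 <-> e \in E) ->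
  (forall e j, dotv c (pt (e, j)) = b - gv j - dl e j) ->
  (forall e j, S (e, j) <-> e \in E /\ j \in J) ->
  (forall i, dotv c (pt i) <= b) /\ (forall i, dotv c (pt i) = b <-> S i).
Proof.
move=> g0 gJ d0 dE Hc HS; split=> -[e j]; rewrite Hc -addrA -opprD.
  by rewrite gerBl addr_ge0.
split.
  move/eqP; rewrite -subr_eq0 addrAC subrr add0r oppr_eq0 paddr_eq0 //.
  by case/andP => /eqP/gJ jJ /eqP/dE eE; apply/HS.
by case/HS => /dE -> /gJ ->; rewrite addr0 subr0.
Qed.

Section Psn.
Variables (k n : nat) (t : 'I_n.+1 -> R) (lam : R).
Local Notation pt := (psn_points k t lam).

Definition mkc (q : {poly R}) (mu : R) : 'rV[R]_(2 * k + 2) :=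
  \row_(i < 2 * k + 2) (if (i == (2 * k + 1)%N :> nat) then mu else q`_(i.+1)).

Lemma dot_mkc (q : {poly R}) (mu : R) (e : bool) (j : 'I_n.+1) : (size q <= (2 * k + 2).+1)%N ->
  dotv (mkc q mu) (pt (e, j)) = q.[t j] - q`_0 - q`_(2 * k + 2) * t j ^+ (2 * k + 2)
    + mu * (if e then lam - t j ^+ (2 * k + 2) else t j ^+ (2 * k + 2)).
Proof.
move=> Hs; rewrite /dotv.
set G := fun i : nat => (if (i == (2 * k + 1)%N) then mu else q`_(i.+1)) *
   (if e && (i == (2 * k + 1)%N) then lam - t j ^+ (2 * k + 2) else t j ^+ i.+1).
rewrite (eq_bigr (fun i : 'I_(2*k+2) => G i)); last by move=> i _; rewrite !mxE.
rewrite -(big_mkord xpredT G).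
rewrite (horner_coef_wide _ Hs) -(big_mkord xpredT (fun i => q`_i * t j ^+ i)).
rewrite big_nat_recl // expr0 mulr1.
rewrite /G; rewrite (_ : (2*k+2 = (2*k+1).+1)%N); last by rewrite addnS.
rewrite !big_nat_recr //= eqxx andbT.
rewrite (eq_big_nat _ _ (F2 := fun i => q`_i.+1 * t j ^+ i.+1)); last first.
  by move=> i /andP [_ Hi]; rewrite ltn_eqF // andbF.
set s := \sum_(0 <= i < 2*k+1) _.
set a := q`_0.
set h := q`_(2*k+1).+1 * _.
by congr (_ + _); rewrite [a + _]addrC addrK addrK.
Qed.


Lemma dot_mkc_gen (q : {poly R}) (e : bool) (j : 'I_n.+1) :
  (size q <= (2 * k + 2).+1)%N -> (e -> (size q <= 2 * k + 2)%N) ->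
  dotv (mkc q q`_(2 * k + 2)) (pt (e, j)) = q.[t j] - q`_0.
Proof.
move=> H1 H2; rewrite dot_mkc //; case: e H2 => [H2|_].
  by rewrite (nth_default 0 (H2 isT)) !mul0r subr0 addr0.
by rewrite subrK.
Qed.

Lemma dot_mkc_low (q : {poly R}) (e : bool) (j : 'I_n.+1) :
  (size q <= 2 * k + 2)%N -> dotv (mkc q 0) (pt (e, j)) = q.[t j] - q`_0.
Proof.
move=> H; have -> : mkc q 0 = mkc q q`_(2 * k + 2) by rewrite (nth_default 0 H).
apply: dot_mkc_gen => //; exact: leq_trans H (leqnSn _).
Qed.

Lemma dot_ed (e : bool) (j : 'I_n.+1) :
  dotv (mkc 0 1) (pt (e, j)) = if e then lam - t j ^+ (2 * k + 2) else t j ^+ (2 * k + 2).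
Proof. by rewrite dot_mkc ?size_poly0 // horner0 !coef0 mul0r !subr0 mul1r add0r. Qed.

Lemma pt_diff (j : 'I_n.+1) :
  pt (true, j) = pt (false, j) + (lam - 2 * t j ^+ (2 * k + 2)) *: mkc 0 1.
Proof.
apply/rowP => i; rewrite !mxE /=; case: eqP => [Ei|_].
  by rewrite Ei -addnS mulr1 mulr_natl mulr2n addrCA opprD addNKr.
by rewrite coef0 mulr0 addr0.
Qed.

Hypothesis tinj : injective t.

Definition Qn (s : nat -> 'I_n.+1) (ns : seq nat) : {poly R} :=
  \prod_(x <- map (fun m => t (s m)) ns) ('X - x%:P).

Lemma size_Qn s ns : size (Qn s ns) = (size ns).+1.
Proof. by rewrite /Qn size_prod_XsubC size_map. Qed.

Lemma Qn_root s N ns a : inj_upto s N -> all (fun m => (m < N)%N) ns -> (a < N)%N ->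
  ((Qn s ns).[t (s a)] == 0) = (a \in ns).
Proof.
move=> si Hns Ha; rewrite -/(root _ _) root_prod_XsubC.
apply/mapP/idP => [[m mns /tinj E]|ans]; last by exists a.
have Hm := allP Hns m mns.
by rewrite (si _ _ Ha Hm E).
Qed.

Lemma rem_iota_all N x : all (fun m => (m < N)%N) (rem x (iota 0 N)).
Proof.
apply/allP => m; rewrite mem_rem_uniq ?iota_uniq // inE mem_iota add0n.
by case/andP.
Qed.

Lemma mem_rem_iota N x m : (m \in rem x (iota 0 N)) = (m != x) && (m < N)%N.
Proof. by rewrite mem_rem_uniq ?iota_uniq // inE mem_iota add0n. Qed.

Lemma size_rem_iota N x : (x < N)%N -> size (rem x (iota 0 N)) = N.-1.
Proof. by move=> H; rewrite size_rem ?size_iota // mem_iota add0n. Qed.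

Lemma pat1_psn M (e : bool) (s : nat -> 'I_n.+1) : (M.+1 <= (2 * k + 2).+1)%N ->
  (e -> (M.+1 <= 2 * k + 2)%N) -> inj_upto s M.+1 ->
  aff_indep (fun l : 'I_M.+1 => pt (e, s l)).
Proof.
move=> HM He si.
pose Q (l : 'I_M) := Qn s (rem l.+1 (iota 0 M.+1)).
have sQ (l : 'I_M) : size (Q l) = M.+1.
  by rewrite /Q size_Qn size_rem_iota // ltnS ltn_ord.
have val (l l' : 'I_M) : dotv (mkc (Q l) (Q l)`_(2 * k + 2)) (pt (e, s (lift ord0 l')) - pt (e, s ord0))
    = (Q l).[t (s l'.+1)].
  have Hd (j : 'I_n.+1) : dotv (mkc (Q l) (Q l)`_(2 * k + 2)) (pt (e, j)) = (Q l).[t j] - (Q l)`_0.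
    by apply: dot_mkc_gen; rewrite sQ.
  rewrite dotvB !Hd lift0.
  have -> : (Q l).[t (s (@ord0 M))] = 0.
    by apply/eqP; rewrite (Qn_root si) ?rem_iota_all // mem_rem_iota.
  by rewrite sub0r opprK subrK.
apply: (@aff_indep_tri _ M _ (fun l => mkc (Q l) (Q l)`_(2 * k + 2))).
- move=> l l' ll'; rewrite val; apply/eqP; rewrite (Qn_root si) ?rem_iota_all //; last by rewrite ltnS ltn_ord.
  by rewrite mem_rem_iota eqSS ltnS ltn_ord andbT neq_ltn ll' orbT.
- move=> l; rewrite val (Qn_root si) ?rem_iota_all //; last by rewrite ltnS ltn_ord.
  by rewrite mem_rem_iota eqxx.
Qed.

Hypothesis Hlam : forall j, 2 * t j ^+ (2 * k + 2) < lam.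

Lemma pat2_psn : pat2 k pt.
Proof.
move=> s si.
pose Q (l : 'I_k.+1) := Qn s (rem l.+1 (iota 0 k.+1)).
have sQ (l : 'I_k.+1) : (l < k)%N -> (size (Q l) <= 2 * k + 2)%N.
  by move=> lk; rewrite size_Qn size_rem_iota ?ltnS //=; nlia.
have Q0 l : (Q l).[t (s 0%N)] = 0.
  by apply/eqP; rewrite (Qn_root si) ?rem_iota_all // mem_rem_iota.
apply: (aff_indep_tri (phi := fun l : 'I_k.+1 =>
  if (l < k)%N then mkc (Q l) 0 else mkc 0 1)).
- move=> l l' ll'; have lk : (l < k)%N by exact: leq_trans ll' (ltn_ord l').
  have sQl := sQ l lk.
  rewrite lift0 /= lk eqSS; case: eqP => [_|/eqP l'k].
    by rewrite dotvB !dot_mkc_low // subrr.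
  rewrite dotvB !dot_mkc_low // Q0 sub0r opprK subrK.
  apply/eqP; rewrite (Qn_root si) ?rem_iota_all //; last first.
    by rewrite ltnS ltn_neqAle l'k -ltnS ltn_ord.
  by rewrite mem_rem_iota eqSS neq_ltn ll' orbT /= ltnS ltn_neqAle l'k -ltnS ltn_ord.
- move=> l; rewrite lift0 /= eqSS; case: ifP => lk.
    have sQl := sQ l lk.
    rewrite (ltn_eqF lk) dotvB !dot_mkc_low // Q0 sub0r opprK subrK.
    rewrite (Qn_root si) ?rem_iota_all //; first by rewrite mem_rem_iota eqxx.
  have -> : (l == k :> nat) by rewrite eqn_leq -ltnS ltn_ord leqNgt lk.
  rewrite dotvB !dot_ed.
  have := Hlam (s 0%N); rewrite -subr_gt0 => H.
  rewrite mulr_natl mulr2n opprD addrA in H; exact: lt0r_neq0 H.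
Qed.


Lemma pat1_k : pat1 k pt.
Proof. move=> e s si; apply: pat1_psn => // [|_]; nlia. Qed.

Lemma goodA_psn : goodA k (@goodR k n) pt.
Proof.
move=> c b Hv Hd.
set g := dotv c (mkc 0 1).
have Hb j : dotv c (pt (true, j)) = dotv c (pt (false, j)) + (lam - 2 * t j ^+ (2 * k + 2)) * g.
  by rewrite pt_diff dotvD dotvZ.
have Hpos j : 0 < lam - 2 * t j ^+ (2 * k + 2) by rewrite subr_gt0.
have P2 := pat2_psn.
case: (ltgtP g 0) => Hg.
- have Hlt j : dotv c (pt (true, j)) < dotv c (pt (false, j)).
    by rewrite Hb gtrDl pmulr_rlt0.
  apply: (@good_of_rect _ k n pt _ [set false] [set j | dotv c (pt (false, j)) == b] pat1_k P2 _ Hd).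
  move=> [] j; rewrite !inE /=; split.
  + move=> E; move: (lt_le_trans (Hlt j) (Hv (false, j))); by rewrite E ltxx.
  + by case.
  + by move=> ->; rewrite eqxx.
  + by case=> _ /eqP.
- have Hlt j : dotv c (pt (false, j)) < dotv c (pt (true, j)).
    by rewrite Hb ltrDl pmulr_rgt0.
  apply: (@good_of_rect _ k n pt _ [set true] [set j | dotv c (pt (true, j)) == b] pat1_k P2 _ Hd).
  move=> [] j; rewrite !inE /=; split.
  + by move=> ->; rewrite eqxx.
  + by case=> _ /eqP.
  + move=> E; move: (lt_le_trans (Hlt j) (Hv (true, j))); by rewrite E ltxx.
  + by case.
- apply: (@good_of_rect _ k n pt _ [set: bool] [set j | dotv c (pt (false, j)) == b] pat1_k P2 _ Hd).
  move=> e j; rewrite !inE /=; have -> : dotv c (pt (e, j)) = dotv c (pt (false, j)).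
    by case: e => //; rewrite Hb Hg mulr0 addr0.
  by split=> [->|[_ /eqP]] //; rewrite eqxx.
Qed.


Hypothesis tle : forall j, t j <= t ord_max.

Lemma expo_poly (J : {set 'I_n.+1}) (r : nat) : exists g : {poly R},
  [/\ size g = (2 * (#|J| + r)).+1, g`_(2 * (#|J| + r)) = 1,
      forall j, 0 <= g.[t j] & forall j, g.[t j] = 0 <-> j \in J].
Proof.
set sv := t ord_max + 1.
set sq := [seq t j | j <- enum J] ++ nseq r sv.
set h := \prod_(x <- sq) ('X - x%:P).
have sh : size h = (#|J| + r).+1.
  by rewrite /h size_prod_XsubC size_cat size_map size_nseq cardE.
have mh : lead_coef h = 1 by apply/monicP; exact: monic_prod_XsubC.
have h0 : h != 0 by rewrite -size_poly_eq0 sh.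
have Sg : size (h * h) = (2 * (#|J| + r)).+1.
  by rewrite size_mul // sh mul2n -addnn addSn addnS.
exists (h * h); split => //.
- have := lead_coefE (h * h); rewrite Sg lead_coefM mh mulr1 /= => ->; done.
- by move=> j; rewrite hornerM -expr2 sqr_ge0.
- move=> j; rewrite hornerM; split.
    move/eqP; rewrite mulf_eq0 orbb -/(root _ _) root_prod_XsubC mem_cat.
    case/orP => [/mapP [j' j'J /tinj ->]|]; first by rewrite -mem_enum.
    rewrite mem_nseq => /andP [_ /eqP E].
    have : t j < sv by apply: le_lt_trans (tle j) _; rewrite ltrDl ltr01.
    by rewrite E ltxx.
  move=> jJ; apply/eqP; rewrite mulf_eq0 orbb -/(root _ _) root_prod_XsubC mem_cat.
  by apply/orP; left; apply/mapP; exists j; rewrite ?mem_enum.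
Qed.

Lemma goodB_psn : goodB k (@goodR k n) pt.
Proof.
move=> S [E [J [Hc HS]]]; split; last first.
  apply: (dimB (w := mkc 0 1) _ Hc HS) => j.
  rewrite pt_diff addrAC subrr add0r; exact: scalemx_sub (submx_refl _).
have Hpos j : 0 < lam - t j ^+ (2 * k + 2) - t j ^+ (2 * k + 2).
  by have := Hlam j; rewrite mulr_natl mulr2n -subr_gt0 opprD addrA.
case: (boolP (true \in E)) => tE; case: (boolP (false \in E)) => fE.
-
  have E2 : (2 <= #|E|)%N.
    have : [set true; false] \subset E by apply/subsetP => x; rewrite !inE => /orP[] /eqP ->.
    by move/subset_leq_card; rewrite cards2.
  have HJ : (#|J| <= k)%N by nlia.
  have [g [sg _ g0 gJ]] := expo_poly J (k - #|J|).
  rewrite subnKC // in sg.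
  have gD : g`_(2 * k + 2) = 0 by rewrite nth_default // sg; nlia.
  exists (mkc (- g) 0), g`_0.
  apply: (expose_gen (gv := fun j => g.[t j]) (dl := fun _ _ => 0) (E := E) (J := J)) => //.
  + by move=> e j; split=> // _; case: e.
  + move=> e j; rewrite dot_mkc; last by rewrite size_polyN sg; nlia.
    by rewrite hornerN !coefN gD id3.
-
  have E1 : (1 <= #|E|)%N by apply/card_gt0P; exists true.
  have HJ : (#|J| <= k.+1)%N by nlia.
  have [g [sg gl g0 gJ]] := expo_poly J (k.+1 - #|J|).
  rewrite subnKC // in sg gl.
  have gD : g`_(2 * k + 2) = 1 by rewrite -gl mulnSr addnC.
  exists (mkc (- g) 1), (g`_0 + lam).
  apply: (expose_gen (gv := fun j => g.[t j])
    (dl := fun e j => lam - t j ^+ (2 * k + 2) - (if e then lam - t j ^+ (2 * k + 2) else t j ^+ (2 * k + 2)))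
    (E := E) (J := J)) => //.
  + by move=> [] j; rewrite ?subrr // ltW.
  + move=> [] j; rewrite ?subrr ?tE ?(negbTE fE); split=> //.
    by move=> E0; move: (Hpos j); rewrite E0 ltxx.
  + move=> e j; rewrite dot_mkc; last by rewrite size_polyN sg; nlia.
    by rewrite hornerN !coefN gD (id2 _ _ _ _ lam).
-
  have E1 : (1 <= #|E|)%N by apply/card_gt0P; exists false.
  have HJ : (#|J| <= k.+1)%N by nlia.
  have [g [sg gl g0 gJ]] := expo_poly J (k.+1 - #|J|).
  rewrite subnKC // in sg gl.
  have gD : g`_(2 * k + 2) = 1 by rewrite -gl mulnSr addnC.
  exists (mkc (- g) (-1)), g`_0.
  apply: (expose_gen (gv := fun j => g.[t j])
    (dl := fun e j => (if e then lam - t j ^+ (2 * k + 2) else t j ^+ (2 * k + 2)) - t j ^+ (2 * k + 2))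
    (E := E) (J := J)) => //.
  + by move=> [] j; rewrite ?subrr // ltW.
  + move=> [] j; rewrite ?subrr ?fE ?(negbTE tE); split=> //.
    by move=> E0; move: (Hpos j); rewrite E0 ltxx.
  + move=> e j; rewrite dot_mkc; last by rewrite size_polyN sg; nlia.
    by rewrite hornerN !coefN gD id1.
-
  exists 0, 1; split=> [i|[e j]]; first by rewrite dotv0l ler01.
  rewrite dotv0l; split=> [/eqP|/HS [eE _]]; first by rewrite eq_sym oner_eq0.
  by case: e eE; rewrite ?(negbTE tE) ?(negbTE fE).
Qed.

End Psn.

Lemma sum_nat_delta N (F : nat -> R) m : (m < N)%N ->
  \sum_(i < N) F i * ((i == m :> nat)%:R) = F m.
Proof.
move=> Hm; rewrite (bigD1 (Ordinal Hm)) //= eqxx mulr1 big1 ?addr0 // => i.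
by rewrite -val_eqE /= => /negbTE ->; rewrite mulr0.
Qed.

Section Ysec.
Variables (k n : nat).

Definition qY (p : bool * 'I_n.+1) : 'rV[R]_(1 + n) :=
  row_mx (\row_(i < 1) (p.1%:R)) (\row_(i < n) ((i.+1 == p.2 :> nat)%:R)).

Definition cY (a : R) (f : nat -> R) : 'rV[R]_(1 + n) :=
  row_mx (\row_(i < 1) a) (\row_(i < n) f i.+1).

Lemma dot_cY a f (e : bool) (j : 'I_n.+1) :
  dotv (cY a f) (qY (e, j)) = a * e%:R + (if (j == 0 :> nat) then 0 else f j).
Proof.
rewrite /dotv big_split_ord /= big_ord1 !row_mxEl !mxE; congr (_ + _).
under eq_bigr do rewrite !row_mxEr !mxE.
case: j => [[|j'] Hj] /=.
  by rewrite big1 // => i _; rewrite mulr0.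
under eq_bigr do rewrite eqSS.
exact: (sum_nat_delta (fun i => f i.+1)).
Qed.

Definition psi (j : 'I_n.+1) := cY 0 (fun x => (x == j :> nat)%:R - (j == 0 :> nat)%:R).
Definition psiE := cY 1 (fun _ => 0).

Lemma dot_psi j (e : bool) j' :
  dotv (psi j) (qY (e, j')) = (j' == j :> nat)%:R - (j == 0 :> nat)%:R.
Proof.
rewrite dot_cY mul0r add0r; case: eqP => [E|//].
by rewrite E eq_sym subrr.
Qed.

Lemma dot_psiE (e : bool) j : dotv psiE (qY (e, j)) = e%:R.
Proof. by rewrite dot_cY mul1r; case: ifP => _; rewrite addr0. Qed.

Lemma sne (s : nat -> 'I_n.+1) N a b : inj_upto s N -> (a < N)%N -> (b < N)%N ->
  a != b -> (s a == s b :> nat) = false.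
Proof.
move=> si Ha Hb ne; rewrite val_eqE; apply/negbTE/eqP => E.
by move: ne; rewrite (si _ _ Ha Hb E) eqxx.
Qed.

Lemma pat1_Y : pat1 k qY.
Proof.
move=> e s si.
have bnd (l : 'I_k.+1) : (l.+1 < k.+2)%N by rewrite ltnS ltn_ord.
apply: (@aff_indep_tri _ k.+1 _ (fun l : 'I_k.+1 => psi (s l.+1))).
- move=> l l' ll'; rewrite lift0 dotvB !dot_psi.
  have -> : (s l'.+1 == s l.+1 :> nat) = false.
    by apply: (sne si); rewrite ?bnd // eqSS neq_ltn ll' orbT.
  have -> : (s 0%N == s l.+1 :> nat) = false by apply: (sne si); rewrite ?bnd.
  by rewrite subrr.
- move=> l; rewrite lift0 dotvB !dot_psi eqxx.
  have -> : (s 0%N == s l.+1 :> nat) = false by apply: (sne si); rewrite ?bnd.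
  by rewrite sub0r opprK subrK oner_eq0.
Qed.

Lemma pat2_Y : pat2 k qY.
Proof.
move=> s si.
have bnd (l : 'I_k.+1) : (l < k)%N -> (l.+1 < k.+1)%N by move=> H; rewrite ltnS.
apply: (@aff_indep_tri _ k.+1 _ (fun l : 'I_k.+1 =>
  if (l < k)%N then psi (s l.+1) else psiE)).
- move=> l l' ll'; have lk : (l < k)%N by exact: leq_trans ll' (ltn_ord l').
  rewrite lift0 /= lk eqSS; case: eqP => [_|/eqP l'k].
    by rewrite dotvB !dot_psi subrr.
  have l'k' : (l' < k)%N by rewrite ltn_neqAle l'k -ltnS ltn_ord.
  rewrite dotvB !dot_psi.
  have -> : (s l'.+1 == s l.+1 :> nat) = false.
    by apply: (sne si); rewrite ?bnd // eqSS neq_ltn ll' orbT.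
  have -> : (s 0%N == s l.+1 :> nat) = false by apply: (sne si); rewrite ?bnd.
  by rewrite subrr.
- move=> l; rewrite lift0 /= eqSS; case: ifP => lk.
    rewrite (ltn_eqF lk) dotvB !dot_psi eqxx.
    have -> : (s 0%N == s l.+1 :> nat) = false by apply: (sne si); rewrite ?bnd.
    by rewrite sub0r opprK subrK oner_eq0.
  have -> : (l == k :> nat) by rewrite eqn_leq -ltnS ltn_ord leqNgt lk.
  by rewrite dotvB !dot_psiE subr0 oner_eq0.
Qed.

Lemma qY_rect e e' j j' : qY (e, j) + qY (e', j') = qY (e, j') + qY (e', j).
Proof. by rewrite /qY !add_row_mx /= [X in row_mx _ X]addrC. Qed.

Lemma goodA_Y : goodA k (@goodR k n) qY.
Proof.
move=> c b Hv Hd.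
case: (classic (exists p, dotv c (qY p) = b)) => [[[e0 j0] H0]|Hno]; last first.
  exists set0, set0; rewrite !cards0; split=> // e j; rewrite !inE; split=> [H|[]//].
  by case: Hno; exists (e, j).
have Hr e j : dotv c (qY (e, j)) + dotv c (qY (e0, j0)) =
              dotv c (qY (e, j0)) + dotv c (qY (e0, j)).
  by rewrite -!dotvD qY_rect.
apply: (@good_of_rect _ k n qY _ [set e | dotv c (qY (e, j0)) == b]
  [set j | dotv c (qY (e0, j)) == b] pat1_Y pat2_Y _ Hd).
move=> e j; rewrite !inE; split.
- move=> E; have Hs := Hr e j; rewrite E H0 in Hs.
  have L1 := Hv (e, j0); have L2 := Hv (e0, j).
  have A : dotv c (qY (e, j0)) = b.
    apply/le_anti; rewrite L1 /= -(lerD2r (dotv c (qY (e0, j)))) -Hs.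
    by rewrite lerD2l.
  have B : dotv c (qY (e0, j)) = b.
    by move: Hs; rewrite A => /addrI.
  by rewrite A B eqxx.
- case=> /eqP A /eqP B; have Hs := Hr e j; rewrite A B H0 in Hs.
  exact: addIr Hs.
Qed.


Lemma cancel1 (a b c : R) : (a - b) + (c - a) = c - b.
Proof. by rewrite addrC addrA subrK. Qed.
Lemma idY0 (E X Z : R) : 0*E + (X - Z) = (1 - Z) - (1 - X) - 0.
Proof. by rewrite mul0r add0r subr0 opprB cancel1. Qed.
Lemma idY2 (E X Z : R) : -1*E + (X - Z) = (1 - Z) - (1 - X) - E.
Proof. by rewrite mulN1r opprB cancel1 addrC. Qed.
Lemma idY1 (E X Z : R) : 1*E + (X - Z) = ((1 - Z) + 1) - (1 - X) - (1 - E).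
Proof. by rewrite mul1r !opprB (addrAC (1 - Z)) cancel1 -addrA (addrC 1) subrK addrC. Qed.

Lemma dot_cYJ a (J : {set 'I_n.+1}) (e : bool) j :
  dotv (cY a (fun x => (@inord n x \in J)%:R - (ord0 \in J)%:R)) (qY (e, j)) =
  a * e%:R + ((j \in J)%:R - (ord0 \in J)%:R).
Proof.
rewrite dot_cY; case: eqP => [E|_]; last by rewrite inord_val.
have -> : j = ord0 by apply: val_inj.
by rewrite subrr.
Qed.

Lemma goodB_Y : goodB k (@goodR k n) qY.
Proof.
move=> S [E [J [Hc HS]]]; split; last first.
  apply: (dimB (w := qY (true, ord0) - qY (false, ord0)) _ Hc HS) => j.
  have -> : qY (true, j) - qY (false, j) = qY (true, ord0) - qY (false, ord0).
    apply/eqP; rewrite subr_eq addrAC -qY_rect addrK //.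
  exact: submx_refl.
set Z : R := (ord0 \in J)%:R.
set f := fun x => (@inord n x \in J)%:R - Z.
have g0 j : 0 <= 1 - ((j \in J)%:R : R) by case: (j \in J); rewrite ?subrr ?subr0 ?ler01.
have gJ j : 1 - ((j \in J)%:R : R) = 0 <-> j \in J.
  by case: (j \in J); rewrite ?subrr ?subr0; split=> // /eqP; rewrite oner_eq0.
case: (boolP (true \in E)) => tE; case: (boolP (false \in E)) => fE.
- exists (cY 0 f), (1 - Z).
  apply: (expose_gen (gv := fun j => 1 - (j \in J)%:R) (dl := fun _ _ => 0) (E := E) (J := J)) => //.
  + by move=> e j; split=> // _; case: e.
  + by move=> e j; rewrite dot_cYJ idY0.
- exists (cY 1 f), ((1 - Z) + 1).
  apply: (expose_gen (gv := fun j => 1 - (j \in J)%:R) (dl := fun e _ => 1 - e%:R) (E := E) (J := J)) => //.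
  + by move=> [] j; rewrite ?subrr ?subr0 ?ler01.
  + move=> [] j; rewrite ?subrr ?subr0 ?tE ?(negbTE fE); split=> //.
    by move/eqP; rewrite oner_eq0.
  + by move=> e j; rewrite dot_cYJ idY1.
- exists (cY (-1) f), (1 - Z).
  apply: (expose_gen (gv := fun j => 1 - (j \in J)%:R) (dl := fun e _ => e%:R) (E := E) (J := J)) => //.
  + move=> [] j; rewrite ?fE ?(negbTE tE); split=> //.
    by move/eqP; rewrite oner_eq0.
  + by move=> e j; rewrite dot_cYJ idY2.
- exists 0, 1; split=> [i|[e j]]; first by rewrite dotv0l ler01.
  rewrite dotv0l; split=> [/eqP|/HS [eE _]]; first by rewrite eq_sym oner_eq0.
  by case: e eE; rewrite ?(negbTE tE) ?(negbTE fE).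
Qed.


Lemma dot_cY_gen a f (x : 'rV[R]_(1 + n)) :
  dotv (cY a f) x = a * x 0 (lshift n ord0) + \sum_(i < n) f i.+1 * x 0 (rshift 1 i).
Proof.
rewrite /dotv big_split_ord /= big_ord1 !row_mxEl !mxE; congr (_ + _).
by apply: eq_bigr => i _; rewrite row_mxEr mxE.
Qed.

Lemma sum_ord_delta N (G : 'I_N -> R) (m : 'I_N) :
  \sum_(i < N) G i * ((i == m)%:R) = G m.
Proof.
rewrite (bigD1 m) //= eqxx mulr1 big1 ?addr0 // => i /negbTE ->.
by rewrite mulr0.
Qed.

Lemma convY_sub x : conv qY x -> @prod_simplex R 1 n x.
Proof.
case=> w [w0 w1 ->].
set X := \sum_p w p *: qY p.
have Hd c : dotv c X = \sum_p w p * dotv c (qY p).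
  by rewrite dotv_sum; apply: eq_bigr => p _; rewrite dotvZ.
have wle (F : bool * 'I_n.+1 -> R) : (forall p, 0 <= F p <= 1) ->
    0 <= \sum_p w p * F p <= 1.
  move=> HF; apply/andP; split.
    by apply: sumr_ge0 => p _; apply: mulr_ge0 => //; case/andP: (HF p).
  rewrite -w1; apply: ler_sum => p _; rewrite ler_piMr //; by case/andP: (HF p).
have b01 (b : bool) : 0 <= (b%:R : R) <= 1 by case: b; rewrite ?ler01 ?lexx.
have E1 : lsubmx X 0 ord0 = \sum_p w p * (p.1)%:R.
  rewrite mxE.
  have := dot_cY_gen 1 (fun _ => 0) X.
  rewrite mul1r big1 ?addr0 => [<-|i _]; last by rewrite mul0r.
  by rewrite Hd; apply: eq_bigr => -[e j] _; rewrite dot_psiE.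
have E2 i : rsubmx X 0 i = \sum_p w p * (i.+1 == p.2 :> nat)%:R.
  rewrite mxE.
  have := dot_cY_gen 0 (fun m => (m == i.+1)%:R) X.
  rewrite mul0r add0r.
  under eq_bigr do rewrite eqSS -[(_ == i :> nat)]/(_ == i) mulrC.
  rewrite sum_ord_delta => <-; rewrite Hd; apply: eq_bigr => -[e j] _.
  rewrite dot_cY mul0r add0r; case: eqP => [->|_] //.
  by rewrite eq_sym.
have E3 : \sum_(i < n) rsubmx X 0 i
          = \sum_p w p * (p.2 != 0 :> nat)%:R.
  have := dot_cY_gen 0 (fun _ => 1) X.
  rewrite mul0r add0r.
  under eq_bigr do rewrite mul1r.
  move=> E; rewrite (eq_bigr (fun i => X 0 (rshift 1 i))); last by move=> i _; rewrite mxE.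
  rewrite -E Hd; apply: eq_bigr => -[e j] _.
  by rewrite dot_cY mul0r add0r; case: eqP.
split; split.
- by move=> i; rewrite ord1 E1; case/andP: (wle _ (fun p => b01 p.1)).
- by rewrite big_ord1 E1; case/andP: (wle _ (fun p => b01 p.1)).
- by move=> i; rewrite E2; case/andP: (wle _ (fun p => b01 (i.+1 == p.2 :> nat))).
- by rewrite E3; case/andP: (wle _ (fun p => b01 (p.2 != 0 :> nat))).
Qed.


Lemma convY_sup x : @prod_simplex R 1 n x -> conv qY x.
Proof.
case=> [[Hl0 Hl1] [Hr0 Hr1]].
set y := lsubmx x 0 ord0.
set z := fun i => rsubmx x 0 i.
rewrite big_ord1 in Hl1.
have y0 : 0 <= y by apply: Hl0.
have y1 : 0 <= 1 - y by rewrite subr_ge0.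
have s1 : 0 <= 1 - \sum_i z i by rewrite subr_ge0.
pose Z (j : 'I_n.+1) := (j == ord0)%:R * (1 - \sum_i z i) + \sum_(i < n) z i * (i.+1 == j :> nat)%:R.
pose Ye (e : bool) := if e then y else 1 - y.
have Ye0 e : 0 <= Ye e by case: e.
have YeS : Ye true + Ye false = 1 by rewrite /Ye addrC subrK.
have Z0 j : 0 <= Z j.
  apply: addr_ge0; first by apply: mulr_ge0; rewrite ?ler0n.
  by apply: sumr_ge0 => i _; apply: mulr_ge0; rewrite ?ler0n ?Hr0.
have Zd (i : 'I_n) : \sum_(j < n.+1) Z j * (i.+1 == j :> nat)%:R = z i.
  have Hi : (i.+1 < n.+1)%N by rewrite ltnS.
  rewrite (eq_bigr (fun j => Z j * (j == Ordinal Hi)%:R)); last first.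
    by move=> j _; rewrite eq_sym -val_eqE.
  rewrite sum_ord_delta /Z -val_eqE /= mul0r add0r.
  rewrite (eq_bigr (fun i' => z i' * (i' == i)%:R)); last first.
    by move=> i' _; rewrite eqSS val_eqE.
  by rewrite sum_ord_delta.
have ZS : \sum_j Z j = 1.
  rewrite big_split /= -mulr_suml sum_delta mul1r exchange_big /=.
  rewrite [X in _ + X](eq_bigr (fun i => z i)) ?subrK // => i _.
  have Hi : (i.+1 < n.+1)%N by rewrite ltnS.
  rewrite -mulr_sumr (eq_bigr (fun j => (j == Ordinal Hi)%:R)).
    by rewrite sum_delta mulr1.
  by move=> j _; rewrite eq_sym -val_eqE.
exists (fun p => Ye p.1 * Z p.2); split.
- by move=> p; apply: mulr_ge0.
- rewrite -(pair_bigA _ (fun e j => Ye e * Z j)) /= big_bool /=.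
  by rewrite -!mulr_sumr ZS !mulr1.
- rewrite -[LHS]hsubmxK; apply/rowP => c; rewrite summxE.
  case: (splitP c) => i Ei.
  + have -> : c = lshift n i by apply: val_inj.
    rewrite row_mxEl ord1.
    rewrite (eq_bigr (fun p => Ye p.1 * Z p.2 * (p.1)%:R)); last first.
      by move=> p _; rewrite mxE /qY row_mxEl mxE.
    rewrite -(pair_bigA _ (fun e j => Ye e * Z j * e%:R)) /= big_bool /=.
    rewrite (eq_bigr (fun j => Ye true * Z j)); last by move=> j _; rewrite mulr1.
    rewrite [X in _ + X]big1 ?addr0; last by move=> j _; rewrite mulr0.
    by rewrite -mulr_sumr ZS mulr1.
  + have -> : c = rshift 1 i by apply: val_inj.
    rewrite row_mxEr.
    rewrite (eq_bigr (fun p => Ye p.1 * (Z p.2 * (i.+1 == p.2 :> nat)%:R))); last first.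
      by move=> p _; rewrite mxE /qY row_mxEr mxE mulrA.
    rewrite -(pair_bigA _ (fun e j => Ye e * (Z j * (i.+1 == j :> nat)%:R))) /= big_bool /=.
    by rewrite -!mulr_sumr Zd -mulrDl YeS mul1r.
Qed.

Lemma convY : eq_p (conv qY) (@prod_simplex R 1 n).
Proof. by move=> x; split; [apply: convY_sub|apply: convY_sup]. Qed.

End Ysec.
End Gen.

Unset Implicit Arguments.
Set Strict Implicit.

Theorem proposition2p3 (R : realFieldType) (k n : nat) (t : 'I_n.+1 -> R) :
  (2 * k + 2 <= n)%N ->
  (forall i j : 'I_n.+1, (i < j)%N -> t i < t j) ->
  exists lam0 : R, forall lam : R, lam0 <= lam ->
    has_dim (conv (psn_points k t lam)) (2 * k + 2) /\
    skel_equiv k (conv (psn_points k t lam)) (@prod_simplex R 1 n).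
Proof.
move=> Hn Hmono.
have tinj : injective t.
  move=> i j E; case: (ltngtP i j) => [lt|gt|Eij]; last exact: val_inj Eij.
  - by move: (Hmono _ _ lt); rewrite E ltxx.
  - by move: (Hmono _ _ gt); rewrite E ltxx.
have tle j : t j <= t ord_max.
  case: (ltngtP j (@ord_max n)) => [lt|gt|Eij].
  - exact: ltW (Hmono _ _ lt).
  - by move: (leq_ord j); rewrite leqNgt gt.
  - by rewrite (val_inj Eij).
have ev : ~~ odd (2 * k + 2) by rewrite oddD oddM.
have T0 j : 0 <= 2 * t j ^+ (2 * k + 2) by rewrite mulr_ge0 ?ler0n ?exprn_even_ge0.
exists (1 + \sum_j 2 * t j ^+ (2 * k + 2)) => lam Hlam.
have Hl j : 2 * t j ^+ (2 * k + 2) < lam.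
  apply: lt_le_trans Hlam.
  rewrite (bigD1 j) //= addrCA ltrDl; apply: lt_le_trans (ltr01) _.
  by rewrite lerDl; apply: sumr_ge0 => i _.
split.
- split.
    exists (fun l : 'I_(2 * k + 2).+1 => psn_points k t lam (false, inord l)); split.
      by move=> i; apply: conv_pt.
    apply: (pat1_psn lam tinj (M := 2 * k + 2) (e := false) (s := fun m : nat => @inord n m)) => // l l' Hl' Hl'' E.
    have Hb m : (m < (2 * k + 2).+1)%N -> (m < n.+1)%N.
      by move=> H; apply: leq_trans H _; rewrite ltnS.
    by rewrite -(@inordK n l) ?Hb // E inordK ?Hb.
  move=> [q [_ Hq]].
  move: (rank_leq_col (\matrix_(i < (2 * k + 2).+1) (q (lift ord0 i) - q ord0))).
  by rewrite Hq ltnn.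
- apply: (skel_from (goodA_psn tinj Hl) (goodB_psn tinj Hl tle) (@goodA_Y R k n) (@goodB_Y R k n)).
  exact: convY.
Qed.
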